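(* Let $Q\in\mathbb{C}[x,y,z]$ be a homogeneous polynomial of degree $4$ that is $G_8$-invariant, i.e. $Q(\pm x,\pm y,\pm z)=Q(x,y,z)$ for all choices of signs, and suppose that the plane quartic $C: Q=0$ in $\mathbb{P}^2_{\mathbb{C}}$ is irreducible. If $$\mathrm{Hess}(Q)=\det\Big[\frac{\partial^2 Q}{\partial x_i\partial x_j}\Big]_{i,j}=x^2y^2z^2$$ as polynomials (with $(x_1,x_2,x_3)=(x,y,z)$), then $Q(x,y,z)=Ax^4+By^4+Cz^4$ for some $A,B,C\in\mathbb{C}$ with $ABC=\frac{1}{1728}$.
   Context: $G_8\cong\mathbb{Z}_2^3$ acts on $\mathbb{C}[x,y,z]$ through the diagonal matrices $\mathrm{Diag}(a,b,c)$, $a,b,c\in\{-1,1\}$, by $f\mapsto f(ax,by,cz)$. Consequently every $G_8$-invariant quartic form has the shape $Ax^4+By^4+Cz^4+Dx^2y^2+Ex^2z^2+Fy^2z^2$ with $A,\dots,F\in\mathbb{C}$. *)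

(* Defs.v *)
From HB Require Import structures.
From mathcomp Require Import all_boot all_order all_algebra.
From mathcomp Require Import Rstruct.
From mathcomp Require Import complex.
From mathcomp Require Import mpoly.
Set Implicit Arguments. Unset Strict Implicit. Unset Printing Implicit Defensive.
Import Order.TTheory GRing.Theory Num.Theory.
Local Open Scope ring_scope.

Definition CC : Type := complex Rdefinitions.R.
HB.instance Definition _ := GRing.Field.on CC.

(* polynomials in x = 'X_0, y = 'X_1, z = 'X_2 *)
Notation poly3 := {mpoly CC[3]}.

Definition diag_act (b : 'I_3 -> bool) (f : poly3) : poly3 :=
  f \mPo [tuple ((-1) ^+ b i) *: 'X_i | i < 3].

Definition G8_invariant (f : poly3) : Prop :=
  forall b : 'I_3 -> bool, diag_act b f = f.

(* Irreducible polynomial: nonconstant, and every factorisation has a constant factor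
   (nonzero constants are exactly the units of C[x,y,z]). *)
Definition mpoly_irreducible (f : poly3) : Prop :=
  (1 < msize f)%N /\
  forall g h : poly3, f = g * h -> (msize g <= 1)%N \/ (msize h <= 1)%N.

Definition hessian_mx (f : poly3) : 'M[poly3]_3 :=
  \matrix_(i < 3, j < 3) ((f ^`M(i)) ^`M(j)).
Definition Hess (f : poly3) : poly3 := \det (hessian_mx f).

(* Main.v *)
Require Import Defs.
From HB Require Import structures.
From mathcomp Require Import all_boot all_order all_algebra.
From mathcomp Require Import Rstruct complex mpoly.
From mathcomp Require Import ring zify.
Import GRing.Theory Num.Theory.
Local Open Scope ring_scope.


Notation X0 := ('X_0 : {mpoly CC[3]}).
Notation X1 := ('X_1 : {mpoly CC[3]}).
Notation X2 := ('X_2 : {mpoly CC[3]}).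

Lemma det3 (R : comRingType) (A : 'M[R]_3) : \det A =
  A 0 0 * A 1 1 * A 2 2 + A 0 1 * A 1 2 * A 2 0 + A 0 2 * A 1 0 * A 2 1
  - A 0 0 * A 1 2 * A 2 1 - A 0 1 * A 1 0 * A 2 2 - A 0 2 * A 1 1 * A 2 0.
Proof.
pose B (i j : nat) := A (inord i) (inord j).
have HA : forall i j, A i j = B i j by move=> i j; rewrite /B !inord_val.
rewrite (expand_det_row _ 0) !big_ord_recl big_ord0 /cofactor.
rewrite !(expand_det_row _ 0) !big_ord_recl !big_ord0 /cofactor !det_mx11 !mxE.
rewrite !HA /=.
rewrite /B; ring.
Qed.

Lemma dXE (i j : 'I_3) : ('X_i : {mpoly CC[3]})^`M(j) = (i == j)%:R.
Proof.
rewrite mderivX mnm1E; case: eqP => [->|_]; last by rewrite scale0r.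
have -> : (U_(j) - U_(j))%MM = 0%MM by apply/mnmP => k; rewrite mnmBE subnn mnm0E.
by rewrite mpolyX0 scale1r.
Qed.

Lemma mderivXn (p : {mpoly CC[3]}) n i : (p ^+ n)^`M(i) = p^`M(i) * p ^+ n.-1 *+ n.
Proof.
elim: n => [|n IH]; first by rewrite expr0 -mpolyC1 mderivC mulr0n.
rewrite exprS mderivM IH; case: n IH => [|n] _ /=.
  ring.
rewrite !exprS. ring.
Qed.


Definition mono (a b c : nat) : {mpoly CC[3]} := X0^+a * X1^+b * X2^+c.

Lemma dmon0 a b c : (mono a b c)^`M(0) = a%:R *: mono a.-1 b c.
Proof.
rewrite /mono !mderivM !mderivXn !dXE /= -mul_mpolyC mpolyC_nat. ring.
Qed.
Lemma dmon1 a b c : (mono a b c)^`M(1) = b%:R *: mono a b.-1 c.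
Proof.
rewrite /mono !mderivM !mderivXn !dXE /= -mul_mpolyC mpolyC_nat. ring.
Qed.
Lemma dmon2 a b c : (mono a b c)^`M(2) = c%:R *: mono a b c.-1.
Proof.
rewrite /mono !mderivM !mderivXn !dXE /= -mul_mpolyC mpolyC_nat. ring.
Qed.


Lemma dt0 k a b c : (k%:MP * mono a b c)^`M(0) = (k * a%:R)%:MP * mono a.-1 b c.
Proof. rewrite mderiv_mulC dmon0 -mul_mpolyC; ring. Qed.
Lemma dt1 k a b c : (k%:MP * mono a b c)^`M(1) = (k * b%:R)%:MP * mono a b.-1 c.
Proof. rewrite mderiv_mulC dmon1 -mul_mpolyC; ring. Qed.
Lemma dt2 k a b c : (k%:MP * mono a b c)^`M(2) = (k * c%:R)%:MP * mono a b c.-1.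
Proof. rewrite mderiv_mulC dmon2 -mul_mpolyC; ring. Qed.

Definition Qm (A B C D E F : CC) : {mpoly CC[3]} :=
  A%:MP * mono 4 0 0 + B%:MP * mono 0 4 0 + C%:MP * mono 0 0 4 + D%:MP * mono 2 2 0
  + E%:MP * mono 2 0 2 + F%:MP * mono 0 2 2.

Lemma hessQm A B C D E F : Hess (Qm A B C D E F) =
  (48 * A * D * E)%:MP * mono 6 0 0 + (48 * B * D * F)%:MP * mono 0 6 0 + (48 * C * E * F)%:MP * mono 0 0 6
  + (8 * (6*A*D*F + 36*A*B*E - 3*D^+2*E))%:MP * mono 4 2 0
  + (8 * (36*A*C*D + 6*A*E*F - 3*D*E^+2))%:MP * mono 4 0 2
  + (8 * (36*A*B*F + 6*B*D*E - 3*D^+2*F))%:MP * mono 2 4 0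
  + (8 * (36*B*C*D + 6*B*E*F - 3*D*F^+2))%:MP * mono 0 4 2
  + (8 * (36*A*C*F + 6*C*D*E - 3*E^+2*F))%:MP * mono 2 0 4
  + (8 * (36*B*C*E + 6*C*D*F - 3*E*F^+2))%:MP * mono 0 2 4
  + (8 * (216*A*B*C - 18*A*F^+2 - 18*B*E^+2 - 18*C*D^+2 + 18*D*E*F))%:MP * mono 2 2 2.
Proof.
rewrite /Hess det3 /hessian_mx !mxE /Qm.
rewrite !(mderivD, dt0, dt1, dt2) /=.
rewrite /mono.
ring.
Qed.


Definition mn (a b c : nat) : 'X_{1..3} := [multinom [tuple a; b; c]].

Lemma mnE (m : 'X_{1..3}) : m = mn (m 0) (m 1) (m 2).
Proof.
apply/mnmP => i; rewrite /mn multinomE.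
case: i => [[|[|[|i]]] Hi] //=.
- by congr (m _); apply: val_inj.
- by congr (m _); apply: val_inj.
- by congr (m _); apply: val_inj.
Qed.

Lemma mn0 a b c : mn a b c 0 = a. Proof. by []. Qed.
Lemma mn1 a b c : mn a b c 1 = b. Proof. by []. Qed.
Lemma mn2 a b c : mn a b c 2 = c. Proof. by []. Qed.

Lemma mdeg_mn a b c : mdeg (mn a b c) = (a + b + c)%N.
Proof. by rewrite mdegE !big_ord_recl big_ord0 /= addn0 addnA. Qed.

Lemma eq_mn a b c a' b' c' : (mn a b c == mn a' b' c') = [&& a == a', b == b' & c == c'].
Proof.
apply/idP/idP => [/eqP H| /and3P[/eqP-> /eqP-> /eqP->] //].
have h0 := congr1 (fun m : 'X_{1..3} => m 0) H.
have h1 := congr1 (fun m : 'X_{1..3} => m 1) H.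
have h2 := congr1 (fun m : 'X_{1..3} => m 2) H.
rewrite /= !mn0 !mn1 !mn2 in h0 h1 h2; by rewrite h0 h1 h2 !eqxx.
Qed.

Lemma mono_mn a b c : mono a b c = 'X_[mn a b c].
Proof.
rewrite mpolyXE_id !big_ord_recl big_ord0 /mono mulr1 /= mulrA.
by [].
Qed.

Lemma prodZX (c : 'I_3 -> CC) (m : 'X_{1..3}) :
  \prod_(i < 3) (c i *: ('X_i : {mpoly CC[3]})) ^+ m i
  = (\prod_(i < 3) c i ^+ m i) *: 'X_[m].
Proof.
rewrite [in RHS]mpolyXE_id -scaler_prod; apply: eq_bigr => i _.
by rewrite exprZn.
Qed.

Lemma diag_coef b (p : {mpoly CC[3]}) m :
  (diag_act b p)@_m = (\prod_(i < 3) ((-1) ^+ b i) ^+ m i) * p@_m.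
Proof.
rewrite /diag_act; elim/mpolyind: p m => [|c m' p _ _ IH] m.
  by rewrite comp_mpoly0 !mcoeff0 mulr0.
rewrite comp_mpolyD comp_mpolyZ comp_mpolyX mcoeffD mcoeffZ IH.
have -> : \prod_(i < 3) tnth [tuple (-1) ^+ b i0 *: 'X_i0 | i0 < 3] i ^+ m' i
   = \prod_(i < 3) ((-1) ^+ b i *: ('X_i : {mpoly CC[3]})) ^+ m' i.
  by apply: eq_bigr => i _; rewrite tnth_mktuple.
rewrite prodZX mcoeffZ mcoeffX mcoeffD mcoeffZ mcoeffX.
case: eqP => [->|_]; by rewrite ?mulr1 ?mulr0 ?add0r; ring.
Qed.

Lemma odd_coef (p : {mpoly CC[3]}) (i : 'I_3) (m : 'X_{1..3}) :
  G8_invariant p -> odd (m i) -> p@_m = 0.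
Proof.
move=> inv oi; have := diag_coef (fun j => j == i) p m.
rewrite inv (bigD1 i) //= eqxx big1 => [|j /negbTE ->]; last by rewrite expr1n.
rewrite mulr1 expr1 -signr_odd oi expr1 => h.
have : 2%:R * p@_m = 0 by rewrite mulr2n mulrDl mul1r {1}h; ring.
by move/eqP; rewrite mulf_eq0 pnatr_eq0 /= => /eqP.
Qed.

Definition six := [:: mn 4 0 0; mn 0 4 0; mn 0 0 4; mn 2 2 0; mn 2 0 2; mn 0 2 2].

Lemma zero_coef (Q : {mpoly CC[3]}) : Q \is [in CC[3], 4.-homog] -> G8_invariant Q ->
  forall a b c, mn a b c \notin six -> Q@_(mn a b c) = 0.
Proof.
move=> hom inv a b c H.
have [o|ea] := boolP (odd a); first by apply: (@odd_coef Q 0 _ inv); rewrite mn0.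
have [o|eb] := boolP (odd b); first by apply: (@odd_coef Q 1 _ inv); rewrite mn1.
have [o|ec] := boolP (odd c); first by apply: (@odd_coef Q 2 _ inv); rewrite mn2.
have [d4|dn] := eqVneq (a+b+c)%N 4; last first.
  by apply: (dhomog_nemf_coeff hom); rewrite /= mdeg_mn.
exfalso.
have ha : (a <= 4)%N by lia.
have hb : (b <= 4)%N by lia.
have hc : (c <= 4)%N by lia.
move: a b c ha hb hc H ea eb ec d4 => [|[|[|[|[|a]]]]] [|[|[|[|[|b]]]]] [|[|[|[|[|c]]]]] //=; lia.
Qed.

Lemma shape (Q : {mpoly CC[3]}) : Q \is [in CC[3], 4.-homog] -> G8_invariant Q ->
  Q = Qm Q@_(mn 4 0 0) Q@_(mn 0 4 0) Q@_(mn 0 0 4) Q@_(mn 2 2 0) Q@_(mn 2 0 2) Q@_(mn 0 2 2).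
Proof.
move=> hom inv; apply/mpolyP => m.
rewrite /Qm !mono_mn !mcoeffD !mcoeffCM !mcoeffX.
rewrite (mnE m); move: (m 0) (m 1) (m 2) => a b c.
case: (boolP (mn a b c \in six)) => H.
  move: H; rewrite !inE => /or4P [/eqP->|/eqP->|/eqP->|/orP [/eqP->|/orP [/eqP->|/eqP->]]];
  rewrite !eq_mn /=; ring.
have HF : forall s, s \in six -> (s == mn a b c) = false.
  by move=> s Hs; apply/negbTE; apply: contra H => /eqP <-.
by rewrite (@zero_coef Q hom inv _ _ _ H) !HF //= !mulr0 !addr0.
Qed.


Lemma hess_eqs A B C D E F : Hess (Qm A B C D E F) = mono 2 2 2 ->
  A*D*E = 0 /\ B*D*F = 0 /\ C*E*F = 0 /\
  6*A*D*F + 36*A*B*E - 3*D^+2*E = 0 /\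
  36*A*C*D + 6*A*E*F - 3*D*E^+2 = 0 /\
  36*A*B*F + 6*B*D*E - 3*D^+2*F = 0 /\
  36*B*C*D + 6*B*E*F - 3*D*F^+2 = 0 /\
  36*A*C*F + 6*C*D*E - 3*E^+2*F = 0 /\
  36*B*C*E + 6*C*D*F - 3*E*F^+2 = 0 /\
  8 * (216*A*B*C - 18*A*F^+2 - 18*B*E^+2 - 18*C*D^+2 + 18*D*E*F) = 1.
Proof.
rewrite hessQm => h.
have key m := congr1 (mcoeff m) h.
have r1 := key (mn 6 0 0). have r2 := key (mn 0 6 0). have r3 := key (mn 0 0 6).
have r4 := key (mn 4 2 0). have r5 := key (mn 4 0 2). have r6 := key (mn 2 4 0).
have r7 := key (mn 0 4 2). have r8 := key (mn 2 0 4). have r9 := key (mn 0 2 4).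
have r10 := key (mn 2 2 2).
rewrite !mono_mn !mcoeffD !mcoeffCM !mcoeffX !eq_mn /= in r1 r2 r3 r4 r5 r6 r7 r8 r9 r10.
move/eqP: r1; rewrite -subr_eq0 => /eqP r1.
move/eqP: r2; rewrite -subr_eq0 => /eqP r2.
move/eqP: r3; rewrite -subr_eq0 => /eqP r3.
move/eqP: r4; rewrite -subr_eq0 => /eqP r4.
move/eqP: r5; rewrite -subr_eq0 => /eqP r5.
move/eqP: r6; rewrite -subr_eq0 => /eqP r6.
move/eqP: r7; rewrite -subr_eq0 => /eqP r7.
move/eqP: r8; rewrite -subr_eq0 => /eqP r8.
move/eqP: r9; rewrite -subr_eq0 => /eqP r9.
move/eqP: r10; rewrite -subr_eq0 => /eqP r10.
have c48 : (48 : CC) != 0 by rewrite pnatr_eq0.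
have c8 : (8 : CC) != 0 by rewrite pnatr_eq0.
have k1 : 48 * (A*D*E) = 0 by rewrite -r1; ring.
have k2 : 48 * (B*D*F) = 0 by rewrite -r2; ring.
have k3 : 48 * (C*E*F) = 0 by rewrite -r3; ring.
have k4 : 8 * (6*A*D*F + 36*A*B*E - 3*D^+2*E) = 0 by rewrite -r4; ring.
have k5 : 8 * (36*A*C*D + 6*A*E*F - 3*D*E^+2) = 0 by rewrite -r5; ring.
have k6 : 8 * (36*A*B*F + 6*B*D*E - 3*D^+2*F) = 0 by rewrite -r6; ring.
have k7 : 8 * (36*B*C*D + 6*B*E*F - 3*D*F^+2) = 0 by rewrite -r7; ring.
have k8 : 8 * (36*A*C*F + 6*C*D*E - 3*E^+2*F) = 0 by rewrite -r8; ring.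
have k9 : 8 * (36*B*C*E + 6*C*D*F - 3*E*F^+2) = 0 by rewrite -r9; ring.
have k10 : 8 * (216*A*B*C - 18*A*F^+2 - 18*B*E^+2 - 18*C*D^+2 + 18*D*E*F) - 1 = 0
  by rewrite -r10; ring.
move/eqP: k1; rewrite mulf_eq0 (negbTE c48) => /eqP ->.
move/eqP: k2; rewrite mulf_eq0 (negbTE c48) => /eqP ->.
move/eqP: k3; rewrite mulf_eq0 (negbTE c48) => /eqP ->.
move/eqP: k4; rewrite mulf_eq0 (negbTE c8) => /eqP ->.
move/eqP: k5; rewrite mulf_eq0 (negbTE c8) => /eqP ->.
move/eqP: k6; rewrite mulf_eq0 (negbTE c8) => /eqP ->.
move/eqP: k7; rewrite mulf_eq0 (negbTE c8) => /eqP ->.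
move/eqP: k8; rewrite mulf_eq0 (negbTE c8) => /eqP ->.
move/eqP: k9; rewrite mulf_eq0 (negbTE c8) => /eqP ->.
by move/eqP: k10; rewrite subr_eq0 => /eqP ->.
Qed.


Lemma zk (k : nat) (x : CC) : (k != 0)%N -> k%:R * x = 0 -> x = 0.
Proof. by move=> kn /eqP; rewrite mulf_eq0 pnatr_eq0 (negbTE kn) => /eqP. Qed.

Lemma z2 {x y : CC} : x * y = 0 -> x = 0 \/ y = 0.
Proof. by move/eqP; rewrite mulf_eq0 => /orP [/eqP|/eqP]; [left|right]. Qed.

Lemma nz2 (x y : CC) : x != 0 -> y != 0 -> x * y = 0 -> False.
Proof. by move=> xn yn /eqP; rewrite mulf_eq0 (negbTE xn) (negbTE yn). Qed.

Lemma kz (k : nat) (x y : CC) : (k != 0)%N -> y != 0 -> k%:R * x * y = 0 -> x = 0.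
Proof.
move=> kn yn h; have [|y0] := z2 h; first exact: zk.
by rewrite y0 eqxx in yn.
Qed.

Lemma one0 (x : CC) : 1 = x -> x = 0 -> False.
Proof. by move=> h x0; move: (oner_neq0 CC); rewrite h x0 eqxx. Qed.

Lemma alg_cases (A B C D E F : CC) :
  A*D*E = 0 /\ B*D*F = 0 /\ C*E*F = 0 /\
  6*A*D*F + 36*A*B*E - 3*D^+2*E = 0 /\
  36*A*C*D + 6*A*E*F - 3*D*E^+2 = 0 /\
  36*A*B*F + 6*B*D*E - 3*D^+2*F = 0 /\
  36*B*C*D + 6*B*E*F - 3*D*F^+2 = 0 /\
  36*A*C*F + 6*C*D*E - 3*E^+2*F = 0 /\
  36*B*C*E + 6*C*D*F - 3*E*F^+2 = 0 /\
  8 * (216*A*B*C - 18*A*F^+2 - 18*B*E^+2 - 18*C*D^+2 + 18*D*E*F) = 1 ->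
  (D = 0 /\ E = 0 /\ F = 0 /\ A*B*C = 1/1728%:R)
  \/ (A = 0 /\ B = 0 /\ E = 0 /\ F = 0 /\ D != 0)
  \/ (A = 0 /\ C = 0 /\ D = 0 /\ F = 0 /\ E != 0)
  \/ (B = 0 /\ C = 0 /\ D = 0 /\ E = 0 /\ F != 0).
Proof.
move=> [h1 [h2 [h3 [h4 [h5 [h6 [h7 [h8 [h9 h10]]]]]]]]].
have [D0|Dn] := eqVneq D 0.
  subst D. have [E0|En] := eqVneq E 0.
    subst E. have [F0|Fn] := eqVneq F 0.
      subst F. left; do 3! split => //.
      have h : 1728%:R * (A*B*C) = 1 by rewrite -[RHS]h10; ring.
      have n : (1728%:R : CC) != 0 by rewrite pnatr_eq0.
      by apply: (mulfI n); rewrite h; field.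
    right; right; right.
    have AB : A * B = 0 by apply: (@kz 36 _ F) => //; rewrite -h6; ring.
    have AC : A * C = 0 by apply: (@kz 36 _ F) => //; rewrite -h8; ring.
    have [A0|An] := eqVneq A 0.
      by subst A; exfalso; apply: (one0 _ (esym h10)); ring.
    have [B0|B0] := z2 AB; first by rewrite B0 eqxx in An.
    have [C0|C0] := z2 AC; first by rewrite C0 eqxx in An.
    by subst; repeat split.
  have [F0|Fn] := eqVneq F 0; last first.
    have C0 : C = 0 by apply: (@kz 1 _ (E*F)) => //; [rewrite mulf_neq0 // | rewrite -h3; ring].
    subst C; exfalso.
    have : E * E * F = 0 by apply: (@zk 3) => //; rewrite -[RHS]oppr0 -h8; ring.
    by move/eqP; rewrite !mulf_eq0 (negbTE En) (negbTE Fn).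
  subst F; right; right; left.
  have BC : B * C = 0 by apply: (@kz 36 _ E) => //; rewrite -h9; ring.
  have AB : A * B = 0 by apply: (@kz 36 _ E) => //; rewrite -h4; ring.
  have [B0|Bn] := eqVneq B 0.
    by exfalso; rewrite B0 in h10; apply: (one0 _ (esym h10)); ring.
  have [B1|C0] := z2 BC; first by rewrite B1 eqxx in Bn.
  have [A0|A0] := z2 AB; last by rewrite A0 eqxx in Bn.
  by subst; repeat split.
have [E0|En] := eqVneq E 0; last first.
  have A0 : A = 0 by apply: (@kz 1 _ (D*E)) => //; [rewrite mulf_neq0 // | rewrite -h1; ring].
  subst A; exfalso.
  have : D * D * E = 0 by apply: (@zk 3) => //; rewrite -[RHS]oppr0 -h4; ring.
  by move/eqP; rewrite !mulf_eq0 (negbTE En) (negbTE Dn).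
subst E.
have [F0|Fn] := eqVneq F 0; last first.
  have B0 : B = 0 by apply: (@kz 1 _ (D*F)) => //; [rewrite mulf_neq0 // | rewrite -h2; ring].
  subst B; exfalso.
  have : D * D * F = 0 by apply: (@zk 3) => //; rewrite -[RHS]oppr0 -h6; ring.
  by move/eqP; rewrite !mulf_eq0 (negbTE Fn) (negbTE Dn).
subst F; right; left.
have AC : A * C = 0 by apply: (@kz 36 _ D) => //; rewrite -h5; ring.
have BC : B * C = 0 by apply: (@kz 36 _ D) => //; rewrite -h7; ring.
have [C0|Cn] := eqVneq C 0.
  by exfalso; rewrite C0 in h10; apply: (one0 _ (esym h10)); ring.
have [A0|A0] := z2 AC; last by rewrite A0 eqxx in Cn.
have [B0|B0] := z2 BC; last by rewrite B0 eqxx in Cn.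
by subst; repeat split.
Qed.


Lemma sq (c : CC) : exists w : CC, w * w = c.
Proof.
exists (sqrtC (c : complex Rdefinitions.R)).
by rewrite -expr2 sqrtCK.
Qed.

Lemma big_msize (g : {mpoly CC[3]}) (m : 'X_{1..3}) : g@_m != 0 -> (1 <= mdeg m)%N ->
  ~ (msize g <= 1)%N.
Proof.
move=> gm dm hs.
have := msize_mdeg_lt (m := m) (p := g); rewrite mcoeff_msupp gm => /(_ isT) h.
lia.
Qed.

Lemma red2 (D C : CC) (m1 m2 : 'X_{1..3}) : D != 0 -> m1 != m2 -> (1 <= mdeg m1)%N ->
  ~ mpoly_irreducible (D *: 'X_[m1]^+2 + C *: 'X_[m2]^+2).
Proof.
move=> Dn ne dm [_ H].
have ne' : (m2 == m1) = false by apply/negbTE; rewrite eq_sym.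
have [w hw] := sq (- C / D).
have hC : C = - (D * (w * w)) by rewrite hw; field.
have := H (D *: ('X_[m1] - w *: 'X_[m2])) ('X_[m1] + w *: 'X_[m2]).
case.
- by rewrite hC -!mul_mpolyC; ring.
- apply: (@big_msize _ m1) => //.
  by rewrite mcoeffZ mcoeffB mcoeffZ !mcoeffX eqxx ne' /= mulr0 subr0 mulr1.
- apply: (@big_msize _ m1) => //.
  by rewrite mcoeffD mcoeffZ !mcoeffX eqxx ne' /= mulr0 addr0 oner_neq0.
Qed.

Theorem theorem2p3 (Q : {mpoly CC[3]}) :
  Q \is [in CC[3], 4.-homog] ->
  G8_invariant Q ->
  mpoly_irreducible Q ->
  Hess Q = 'X_0 ^+ 2 * 'X_1 ^+ 2 * 'X_2 ^+ 2 ->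
  exists A B C : CC,
    Q = A *: 'X_0 ^+ 4 + B *: 'X_1 ^+ 4 + C *: 'X_2 ^+ 4 /\
    A * B * C = 1 / 1728%:R.
Proof.
move=> hom inv irr hs.
have := shape Q hom inv.
move: (Q@_(mn 4 0 0)) (Q@_(mn 0 4 0)) (Q@_(mn 0 0 4)) (Q@_(mn 2 2 0)) (Q@_(mn 2 0 2)) (Q@_(mn 0 2 2)).
move=> A B C D E F sh.
rewrite sh in hs irr.
have := alg_cases _ _ _ _ _ _ (hess_eqs _ _ _ _ _ _ hs).
case => [[D0 [E0 [F0 hABC]]] | [[A0 [B0 [E0 [F0 Dn]]]] | [[A0 [C0 [D0 [F0 En]]]] | [B0 [C0 [D0 [E0 Fn]]]]]]].
- exists A, B, C; split => //.
  by rewrite sh D0 E0 F0 /Qm /mono -!mul_mpolyC; ring.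
- exfalso.
  have e : Qm A B C D E F = D *: 'X_[mn 1 1 0]^+2 + C *: 'X_[mn 0 0 2]^+2.
    by rewrite A0 B0 E0 F0 /Qm -!mono_mn /mono -!mul_mpolyC; ring.
  rewrite e in irr.
  by apply: (@red2 D C (mn 1 1 0) (mn 0 0 2) Dn _ _ irr); rewrite ?mdeg_mn.
- exfalso.
  have e : Qm A B C D E F = E *: 'X_[mn 1 0 1]^+2 + B *: 'X_[mn 0 2 0]^+2.
    by rewrite A0 C0 D0 F0 /Qm -!mono_mn /mono -!mul_mpolyC; ring.
  rewrite e in irr.
  by apply: (@red2 E B (mn 1 0 1) (mn 0 2 0) En _ _ irr); rewrite ?mdeg_mn.
- exfalso.
  have e : Qm A B C D E F = F *: 'X_[mn 0 1 1]^+2 + A *: 'X_[mn 2 0 0]^+2.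
    by rewrite B0 C0 D0 E0 /Qm -!mono_mn /mono -!mul_mpolyC; ring.
  rewrite e in irr.
  by apply: (@red2 F A (mn 0 1 1) (mn 2 0 0) Fn _ _ irr); rewrite ?mdeg_mn.
Qed.
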